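(* Let $s>1/2$ and for $w=\sum_{n\in\mathbb Z}w_ne_n\in H^s$ define $$N(w)=\Big(2w_0(\|w\|^2_H-|w_0|^2)+\bar w_0[w,w]\Big)e_0+\sum_{n\ne0}\Big(w_n(2\|w\|^2_H-|w_n|^2-2|w_{-n}|^2)+\bar w_{-n}[w,w]\Big)e_n.$$ Then $[N(w),\bar w]$ is real and $$[N(w),\bar w]\ge \|w\|^4_H.$$
   Context: $e_n(x)=e^{inx}$; $H=L^2_{per}(-\pi,\pi)$ (complex-valued, $2\pi$-periodic) with $\|w\|_H^2=\sum_n|w_n|^2$; $H^s$ is the periodic Sobolev space with $\|w\|_{H^s}^2=\sum_n(|n|^2+1)^s|w_n|^2$. For $w=\sum w_ne_n$, $v=\sum v_ne_n$, $[w,v]:=\sum_{n}w_nv_{-n}$; $\bar w=\sum_n\bar w_{-n}e_n$ is the complex conjugate function (so $[v,\bar w]=\sum_n v_n\bar w_n$ is the $H$-inner product). *)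

(* Defs.v *)
From HB Require Import structures.
From mathcomp Require Import all_boot all_order all_algebra.
From mathcomp Require Import all_classical all_reals all_analysis.
From mathcomp Require Import complex.
Set Implicit Arguments. Unset Strict Implicit. Unset Printing Implicit Defensive.
Import Order.TTheory GRing.Theory Num.Theory numFieldNormedType.Exports.
Local Open Scope ring_scope.

(* A function w : int -> R[i] is the Fourier coefficient sequence n |-> w_n
   of w = sum_n w_n e_n.  Sums over Z are limits of symmetric partial sums
   sum_{-N <= n <= N}; a complex sum is taken componentwise (Re / Im). *)

Section Defs.
Variable R : realType.
Local Notation C := (R[i]).

Definition psumZ (f : int -> C) (N : nat) : C :=
  \sum_(i < (2 * N).+1) f (i%:Z - N%:Z).
Definition rpsumZ (f : int -> R) (N : nat) : R :=
  \sum_(i < (2 * N).+1) f (i%:Z - N%:Z).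

Definition cvgZ (f : int -> C) : Prop :=
  cvgn (fun N => (complex.Re (psumZ f N) : R)) /\ cvgn (fun N => (complex.Im (psumZ f N) : R)).
Definition sumZ (f : int -> C) : C :=
  Complex (limn (fun N => (complex.Re (psumZ f N) : R)))
          (limn (fun N => (complex.Im (psumZ f N) : R))).

Definition abs2 (z : C) : R := complex.Re z ^+ 2 + complex.Im z ^+ 2.

Definition in_Hs (s : R) (w : int -> C) : Prop :=
  cvgn (rpsumZ (fun n => powR ((n%:~R : R) ^+ 2 + 1) s * abs2 (w n))).

Definition normH2 (w : int -> C) : R := limn (rpsumZ (fun n => abs2 (w n))).

Definition bracket (w v : int -> C) : C := sumZ (fun n => w n * v (- n)).

Definition bracket_cvg (w v : int -> C) : Prop := cvgZ (fun n => w n * v (- n)).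

Definition conjfun (w : int -> C) : int -> C := fun n => conjc (w (- n)).

Definition Nw (w : int -> C) : int -> C := fun n =>
  if n == 0 then
    (2%:R * w 0 * real_complex R (normH2 w - abs2 (w 0)) + conjc (w 0) * bracket w w)%R
  else
    (w n * real_complex R (2%:R * normH2 w - abs2 (w n) - 2%:R * abs2 (w (- n)))
       + conjc (w (- n)) * bracket w w)%R.

End Defs.

(* Main.v *)
Require Import Defs.
From HB Require Import structures.
From mathcomp Require Import all_boot all_order all_algebra.
From mathcomp Require Import all_classical all_reals all_analysis.
From mathcomp Require Import complex.
From mathcomp Require Import zify ring lra.
Import Order.TTheory GRing.Theory Num.Theory numFieldNormedType.Exports.
Local Open Scope ring_scope.
Lemma sum_pair (V : zmodType) (f : int -> V) (N : nat) :
  \sum_(i < (2 * N).+1) f (i%:Z - N%:Z) =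
  f 0 + \sum_(k < N) (f (k.+1)%:Z + f (- (k.+1)%:Z)).
Proof.
elim: N => [|N IH].
  by rewrite muln0 big_ord1 big_ord0 addr0 /= addr0.
rewrite (_ : (2 * N.+1).+1 = ((2 * N).+1).+2); last by rewrite mulnS.
rewrite big_ord_recl big_ord_recr [in RHS]big_ord_recr /=.
have -> : \sum_(i < (2 * N).+1) f ((bump 0 i)%:Z - (N.+1)%:Z) =
          \sum_(i < (2 * N).+1) f (i%:Z - N%:Z).
  apply: eq_bigr => i _; congr f; rewrite /bump /=; lia.
rewrite IH.
have -> : (0%:Z - (N.+1)%:Z) = - (N.+1)%:Z by rewrite sub0r.
have -> : ((bump 0 (2*N).+1)%:Z - (N.+1)%:Z) = (N.+1)%:Z by rewrite /bump /=; lia.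
set a := f _; set b := f (N.+1)%:Z; set d := \sum_(i < N) _. 
by rewrite addrC !addrA -(addrA (a+b)) addrC (addrC a b) -[RHS]addrA.
Qed.

Lemma Re_sum (R : realType) n (F : 'I_n -> R[i]) : complex.Re (\sum_(i < n) F i) = \sum_(i < n) complex.Re (F i).
Proof. apply: (big_morph (@complex.Re R)) => //. by case=> ??[]??. Qed.
Lemma Im_sum (R : realType) n (F : 'I_n -> R[i]) : complex.Im (\sum_(i < n) F i) = \sum_(i < n) complex.Im (F i).
Proof. apply: (big_morph (@complex.Im R)) => //. by case=> ??[]??. Qed.
Lemma cs_helper (R : realType) (x X u v U V : R) : 0 <= x -> 0 <= X ->
  u^+2 + v^+2 <= x^+2 -> U^+2 + V^+2 <= X^+2 -> u * U + v * V <= x * X.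
Proof.
move=> hx hX h1 h2.
have cs : (u * U + v * V)^+2 <= (x * X)^+2.
  have e : (u * U + v * V)^+2 + (u * V - v * U)^+2 = (u^+2 + v^+2) * (U^+2 + V^+2) by ring.
  have : (u^+2 + v^+2) * (U^+2 + V^+2) <= x^+2 * X^+2.
    apply: ler_pM => //; nra.
  rewrite exprMn; have := sqr_ge0 (u * V - v * U); lra.
have : 0 <= x * X by apply: mulr_ge0.
nra.
Qed.

Lemma key_ineq (R : realType) (x0 u0 v0 : R) (X U V : nat -> R) :
  0 <= x0 -> u0^+2 + v0^+2 <= x0^+2 ->
  (forall k, 0 <= X k) -> (forall k, U k ^+2 + V k ^+2 <= X k ^+2) ->
  forall N, let SX := x0 + \sum_(k < N) X k in
            let SU := u0 + \sum_(k < N) U k in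
            let SV := v0 + \sum_(k < N) V k in
  [/\ 0 <= SX, SU^+2 + SV^+2 <= SX^+2 &
     x0^+2 + u0^+2 + v0^+2 + \sum_(k < N) (X k ^+2 + U k ^+2 + V k ^+2)
       <= SX^+2 + SU^+2 + SV^+2].
Proof.
move=> hx0 h0 hX hUV; elim=> [|N [IH1 IH2 IH3]] /=.
  rewrite !big_ord0 !addr0; split => //; lra.
rewrite !big_ord_recr /= !addrA.
set sx := x0 + _ in IH1 IH2 IH3 *; set su := u0 + _ in IH2 IH3 *; set sv := v0 + _ in IH2 IH3 *.
have hk := hX N; have hk2 := hUV N.
have c1 := @cs_helper _ _ _ _ _ _ _ hk IH1 hk2 IH2.
have c2 : - U N * su + - V N * sv <= X N * sx.
  apply: cs_helper => //; rewrite !sqrrN //.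
split.
- exact: addr_ge0.
- nra.
- nra.
Qed.
Lemma term0 (R : realType) (w0 B : R[i]) (S : R) :
  let f := ((2%:R * w0 * real_complex R (S - abs2 w0) + conjc w0 * B) * conjc w0)%R in
  complex.Re f = 2 * S * abs2 w0 - (abs2 w0 ^+2 + complex.Re (w0*w0) ^+2 + complex.Im (w0*w0) ^+2)
     + (complex.Re (w0*w0) * complex.Re B + complex.Im (w0*w0) * complex.Im B) /\
  complex.Im f = complex.Re (w0*w0) * complex.Im B - complex.Im (w0*w0) * complex.Re B.
Proof.
case: w0 => p q; case: B => c d; rewrite /abs2 /=. split; ring.
Qed.
Lemma termpair (R : realType) (wn wm B : R[i]) (S : R) :
  let f := ((wn * real_complex R (2%:R * S - abs2 wn - 2%:R * abs2 wm) + conjc wm * B) * conjc wn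
          + (wm * real_complex R (2%:R * S - abs2 wm - 2%:R * abs2 wn) + conjc wn * B) * conjc wm)%R in
  let Y := (wn * wm + wm * wn)%R in
  complex.Re f = 2 * S * (abs2 wn + abs2 wm) - ((abs2 wn + abs2 wm) ^+2 + 2 * abs2 wn * abs2 wm)
     + (complex.Re Y * complex.Re B + complex.Im Y * complex.Im B) /\
  complex.Im f = complex.Re Y * complex.Im B - complex.Im Y * complex.Re B.
Proof.
case: wn => p q; case: wm => p' q'; case: B => c d; rewrite /abs2 /=. split; ring.
Qed.
Lemma mono_bound_cvg (R : realType) (c0 : R) (g : nat -> R) (M : R) :
  (forall k, 0 <= g k) -> (forall N, c0 + \sum_(k < N) g k <= M) ->
  cvgn (fun N => c0 + \sum_(k < N) g k).
Proof.
move=> hg hM; apply: nondecreasing_is_cvgn.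
  apply/nondecreasing_seqP => n; rewrite big_ord_recr /= addrA lerDl; exact: hg.
by exists M => _ [n _ <-].
Qed.

Lemma dom_cvg (R : realType) (c0 : R) (g h : nat -> R) :
  (forall k, `|g k| <= h k) -> cvgn (fun N => \sum_(k < N) h k) ->
  cvgn (fun N => c0 + \sum_(k < N) g k).
Proof.
move=> hgh hc.
have hh k : 0 <= h k by apply: le_trans (hgh k).
have nd : nondecreasing_seq (fun N => \sum_(k < N) h k).
  apply/nondecreasing_seqP => n; rewrite big_ord_recr /= lerDl; exact: hh.
have hle := nondecreasing_cvgn_le nd hc.
have c1 : cvgn (fun N => c0 + \sum_(k < N) (g k + h k)).
  apply: (@mono_bound_cvg R c0 (fun k => g k + h k) (c0 + 2 * limn (fun N => \sum_(k < N) h k))).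
    move=> k; have := hgh k; rewrite ler_norml; lra.
  move=> N; rewrite big_split /=; have := hle N.
  have : \sum_(k < N) g k <= \sum_(k < N) h k.
    by apply: ler_sum => k _; apply: le_trans (hgh k); exact: ler_norm.
  lra.
have -> : (fun N => c0 + \sum_(k < N) g k) = 
   ((fun N => c0 + \sum_(k < N) (g k + h k)) - (fun N => \sum_(k < N) h k)).
  apply/funext => N /=.
  transitivity (c0 + \sum_(k < N) (g k + h k) - \sum_(k < N) h k); last by [].
  by rewrite big_split /= addrA addrK.
exact: is_cvgB.
Qed.

Lemma nd_partial (R : realType) (c0 : R) (g : nat -> R) :
  (forall k, 0 <= g k) -> nondecreasing_seq (fun N => c0 + \sum_(k < N) g k).
Proof.
move=> hg; apply/nondecreasing_seqP => n; rewrite big_ord_recr /= addrA lerDl; exact: hg.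
Qed.

Lemma dom_cvg2 (R : realType) (c0 M : R) (g h : nat -> R) :
  (forall k, `|g k| <= h k) -> (forall N, \sum_(k < N) h k <= M) ->
  cvgn (fun N => c0 + \sum_(k < N) g k).
Proof.
move=> hgh hM.
have hh k : 0 <= h k by apply: le_trans (hgh k).
apply: (@dom_cvg R c0 g h hgh).
have := @mono_bound_cvg R 0 h M hh.
have -> : (fun N => 0 + \sum_(k < N) h k) = (fun N => \sum_(k < N) h k).
  by apply/funext => N; rewrite add0r.
apply => N; rewrite add0r; exact: hM.
Qed.

Lemma ReD' (R : realType) (x y : R[i]) : complex.Re (x + y) = complex.Re x + complex.Re y.
Proof. by case: x; case: y. Qed.
Lemma ImD' (R : realType) (x y : R[i]) : complex.Im (x + y) = complex.Im x + complex.Im y.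
Proof. by case: x; case: y. Qed.

Lemma abs2_ge0 (R : realType) (z : R[i]) : 0 <= abs2 z.
Proof. rewrite /abs2; apply: addr_ge0; exact: sqr_ge0. Qed.

Lemma sq_eq (R : realType) (z : R[i]) :
  complex.Re (z * z) ^+ 2 + complex.Im (z * z) ^+ 2 = abs2 z ^+ 2.
Proof. case: z => p q; rewrite /abs2 /=; ring. Qed.

Lemma pair_eq (R : realType) (wn wm : R[i]) :
  complex.Re (wn * wm + wm * wn) ^+ 2 + complex.Im (wn * wm + wm * wn) ^+ 2
   = 4 * abs2 wn * abs2 wm.
Proof. case: wn => p q; case: wm => p' q'; rewrite /abs2 /=; ring. Qed.

Lemma lin_re (R : realType) (c0 x0 d0 u0 v0 al be ga : R) (T X d U V : nat -> R) :
  (forall k, T k = al * X k - d k + (U k * be + V k * ga)) ->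
  c0 = al * x0 - d0 + (u0 * be + v0 * ga) ->
  forall N, c0 + \sum_(k < N) T k =
    al * (x0 + \sum_(k < N) X k) - (d0 + \sum_(k < N) d k)
    + ((u0 + \sum_(k < N) U k) * be + (v0 + \sum_(k < N) V k) * ga).
Proof.
move=> hT hc; elim=> [|N IH]; first by rewrite !big_ord0 !addr0.
rewrite !big_ord_recr /= addrA IH hT; ring.
Qed.

Lemma lin_im (R : realType) (c0 u0 v0 be ga : R) (T U V : nat -> R) :
  (forall k, T k = U k * ga - V k * be) ->
  c0 = u0 * ga - v0 * be ->
  forall N, c0 + \sum_(k < N) T k =
    (u0 + \sum_(k < N) U k) * ga - (v0 + \sum_(k < N) V k) * be.
Proof.
move=> hT hc; elim=> [|N IH]; first by rewrite !big_ord0 !addr0.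
rewrite !big_ord_recr /= addrA IH hT; ring.
Qed.

Local Open Scope classical_set_scope.

Theorem lemma2p3 (R : realType) (s : R) (w : int -> R[i]) :
  1 / 2 < s -> in_Hs s w ->
  bracket_cvg (Nw w) (conjfun w) /\
  complex.Im (bracket (Nw w) (conjfun w)) = 0 /\
  normH2 w ^+ 2 <= complex.Re (bracket (Nw w) (conjfun w)).
Proof.
move=> hs hw.
pose a n := abs2 (w n).
have a_ge0 n : 0 <= a n by exact: abs2_ge0.
pose S := normH2 w. pose B := bracket w w.
pose bR := complex.Re B. pose bI := complex.Im B.
pose X k := a (k.+1)%:Z + a (- (k.+1)%:Z).
pose Yk k := w (k.+1)%:Z * w (- (k.+1)%:Z) + w (- (k.+1)%:Z) * w (k.+1)%:Z.
pose U k := complex.Re (Yk k). pose V k := complex.Im (Yk k).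
pose u0 := complex.Re (w 0 * w 0). pose v0 := complex.Im (w 0 * w 0).
pose d k := X k ^+ 2 + 2 * a (k.+1)%:Z * a (- (k.+1)%:Z).
pose d0 := a 0 ^+ 2 + u0 ^+ 2 + v0 ^+ 2.
pose SX N := a 0 + \sum_(k < N) X k.
pose SU N := u0 + \sum_(k < N) U k.
pose SV N := v0 + \sum_(k < N) V k.
pose DD N := d0 + \sum_(k < N) d k.
have F1 : rpsumZ (fun n => abs2 (w n)) = SX.
  by apply/funext => N; rewrite /rpsumZ (@sum_pair _ (fun n => abs2 (w n))).
have F2r : (fun N => complex.Re (psumZ (fun n => w n * w (- n)) N)) = SU.
  apply/funext => N; rewrite /psumZ (@sum_pair _ (fun n => w n * w (- n))) ReD' Re_sum oppr0.
  by under eq_bigr do rewrite opprK.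
have F2i : (fun N => complex.Im (psumZ (fun n => w n * w (- n)) N)) = SV.
  apply/funext => N; rewrite /psumZ (@sum_pair _ (fun n => w n * w (- n))) ImD' Im_sum oppr0.
  by under eq_bigr do rewrite opprK.
pose f := fun n => Nw w n * conjfun w (- n).
have nz1 k : ((k.+1)%:Z == 0) = false by [].
have nz2 k : ((- (k.+1)%:Z) == 0) = false by rewrite oppr_eq0.
have F3r : (fun N => complex.Re (psumZ f N)) =
    (fun N => 2 * S * SX N - DD N + (SU N * bR + SV N * bI)).
  apply/funext => N; rewrite /psumZ (@sum_pair _ f) ReD' Re_sum.
  refine (@lin_re R (complex.Re (f 0)) (a 0) d0 u0 v0 (2 * S) bR bI (fun k : nat => complex.Re (f (k.+1)%:Z + f (- (k.+1)%:Z))) X d U V _ _ N).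
    move=> k; rewrite /f /Nw /conjfun nz1 nz2 !opprK.
    exact: (@termpair R (w (k.+1)%:Z) (w (- (k.+1)%:Z)) B S).1.
  rewrite /f /Nw /conjfun ?eqxx ?opprK ?oppr0.
  exact: (@term0 R (w 0) B S).1.
have F3i : (fun N => complex.Im (psumZ f N)) =
    (fun N => SU N * bI - SV N * bR).
  apply/funext => N; rewrite /psumZ (@sum_pair _ f) ImD' Im_sum.
  refine (@lin_im R (complex.Im (f 0)) u0 v0 bR bI (fun k : nat => complex.Im (f (k.+1)%:Z + f (- (k.+1)%:Z))) U V _ _ N).
    move=> k; rewrite /f /Nw /conjfun nz1 nz2 !opprK.
    exact: (@termpair R (w (k.+1)%:Z) (w (- (k.+1)%:Z)) B S).2.
  rewrite /f /Nw /conjfun ?eqxx ?opprK ?oppr0.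
  exact: (@term0 R (w 0) B S).2.
have Xge0 k : 0 <= X k by apply: addr_ge0.
have UVe k : U k ^+ 2 + V k ^+ 2 = 4 * a (k.+1)%:Z * a (- (k.+1)%:Z).
  exact: pair_eq.
have UVX k : U k ^+ 2 + V k ^+ 2 <= X k ^+ 2.
  rewrite UVe /X; have := sqr_ge0 (a (k.+1)%:Z - a (- (k.+1)%:Z)); nra.
have Ule k : `|U k| <= X k.
  have h1 := UVX k; have h2 := sqr_ge0 (V k); have h3 := Xge0 k.
  rewrite ler_norml; apply/andP; split; nra.
have Vle k : `|V k| <= X k.
  have h1 := UVX k; have h2 := sqr_ge0 (U k); have h3 := Xge0 k.
  rewrite ler_norml; apply/andP; split; nra.
have h0 : u0 ^+ 2 + v0 ^+ 2 <= a 0 ^+ 2 by rewrite sq_eq.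
have key := @key_ineq R (a 0) u0 v0 X U V (a_ge0 0) h0 Xge0 UVX.
have dge0 k : 0 <= d k.
  rewrite /d; apply: addr_ge0; first exact: sqr_ge0.
  apply: mulr_ge0; [apply: mulr_ge0 => //|]; exact: a_ge0.
have dle k : d k <= X k ^+ 2 + U k ^+ 2 + V k ^+ 2.
  rewrite /d -addrA UVe; have := a_ge0 (k.+1)%:Z; have := a_ge0 (- (k.+1)%:Z); nra.
have DDle N : DD N <= SX N ^+ 2 + SU N ^+ 2 + SV N ^+ 2.
  have [_ _ k3] := key N.
  apply: le_trans k3; rewrite /DD /d0 lerD2l; apply: ler_sum => k _; exact: dle.
pose W n := powR ((n%:~R : R) ^+ 2 + 1) s * abs2 (w n).
have aW n : abs2 (w n) <= W n.
  rewrite /W; apply: ler_peMl; first exact: abs2_ge0.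
  have h1 : (1 : R) <= (n%:~R : R) ^+ 2 + 1 by rewrite lerDr sqr_ge0.
  have h2 : (0 : R) <= s by lra.
  have := @ler_powR R _ h1 0 s h2; by rewrite powRr0.
have W_ge0 n : 0 <= W n by apply: le_trans (aW n); exact: abs2_ge0.
have WE : rpsumZ W = (fun N => W 0 + \sum_(k < N) (W (k.+1)%:Z + W (- (k.+1)%:Z))).
  by apply/funext => N; rewrite /rpsumZ (@sum_pair _ W).
have Wle N : rpsumZ W N <= limn (rpsumZ W).
  apply: nondecreasing_cvgn_le; last exact: hw.
  rewrite WE; apply: (@nd_partial R (W 0) (fun k => W (k.+1)%:Z + W (- (k.+1)%:Z))) => k.
  apply: addr_ge0; exact: W_ge0.
have SXle0 N : SX N <= limn (rpsumZ W).
  apply: le_trans (Wle N); rewrite -F1 /rpsumZ; apply: ler_sum => i _; exact: aW.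
have cSX : cvgn SX.
  exact: (@mono_bound_cvg R (a 0) X _ Xge0 SXle0).
have SXl : SX @ \oo --> S by rewrite /S /normH2 F1; exact: cSX.
have SXS N : SX N <= S.
  rewrite /S /normH2 F1; apply: nondecreasing_cvgn_le => //.
  exact: (@nd_partial R (a 0) X Xge0).
have SX0 N : 0 <= SX N by have [] := key N.
have sumXS N : \sum_(k < N) X k <= S.
  apply: le_trans (SXS N); rewrite /SX lerDr; exact: a_ge0.
have cSU : cvgn SU by exact: (@dom_cvg2 R u0 S U X Ule sumXS).
have cSV : cvgn SV by exact: (@dom_cvg2 R v0 S V X Vle sumXS).
have SUl : SU @ \oo --> bR by rewrite /bR /B /bracket /sumZ /= F2r; exact: cSU.
have SVl : SV @ \oo --> bI by rewrite /bI /B /bracket /sumZ /= F2i; exact: cSV.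
have cDD : cvgn DD.
  apply: (@mono_bound_cvg R d0 d (2 * S ^+ 2) dge0) => N.
  have [k1 k2 _] := key N.
  apply: le_trans (DDle N) _.
  have := SXS N; have := SX0 N. rewrite -/(SX N) -/(SU N) -/(SV N) in k1 k2 *. nra.
pose Dl := limn DD.
have DDl : DD @ \oo --> Dl by exact: cDD.
have Lre : (fun N => 2 * S * SX N - DD N + (SU N * bR + SV N * bI)) @ \oo
     --> 2 * S * S - Dl + (bR * bR + bI * bI).
  apply: cvgD; first apply: cvgB => //.
    by apply: cvgM => //; exact: cvg_cst.
  by apply: cvgD; apply: cvgM => //; exact: cvg_cst.
have Lim : (fun N => SU N * bI - SV N * bR) @ \oo --> bR * bI - bI * bR.
  by apply: cvgB; apply: cvgM => //; exact: cvg_cst.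
have Lq : (fun N => SX N ^+ 2 + SU N ^+ 2 + SV N ^+ 2) @ \oo
     --> S ^+ 2 + bR ^+ 2 + bI ^+ 2.
  by rewrite !expr2; apply: cvgD; first apply: cvgD; apply: cvgM.
have Dle : Dl <= S ^+ 2 + bR ^+ 2 + bI ^+ 2.
  apply: (ler_cvg_to DDl Lq); exact: nearW.
move: F3r F3i; rewrite /f => F3r F3i.
split.
  rewrite /bracket_cvg /Defs.cvgZ F3r F3i; split; apply: cvgP; [exact: Lre|exact: Lim].
split.
  rewrite /bracket /sumZ /= F3i (cvg_lim (@norm_hausdorff _ _) Lim); ring.
rewrite /bracket /sumZ /= F3r (cvg_lim (@norm_hausdorff _ _) Lre) -/S.
rewrite !expr2 in Dle *; lra.
Qed.
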